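(* Let $n,m,q,L\ge 1$ and let $X\in\mathbb{R}^{n\times L}$, $U\in\mathbb{R}^{m\times L}$, $V\in\mathbb{R}^{q\times L}$, $E\in\mathbb{R}^{n\times q}$, $\mathcal{D}_{11}\in\mathbb{R}^{L\times L}$ be given, and let $\Sigma=\{(A,B)\in\mathbb{R}^{n\times n}\times\mathbb{R}^{n\times m}: X\mathcal{D}_{11}=AX+BU+EV\}$, assumed nonempty. Then the data $(X,U)$ are informative for stabilization (there exists $K\in\mathbb{R}^{m\times n}$ such that $A+BK$ is Hurwitz for all $(A,B)\in\Sigma$) if and only if there exists $\theta\in\mathbb{R}^{L\times n}$ with $X\theta=(X\theta)^{T}>0$ and $\theta^{T}(X\mathcal{D}_{11}-EV)^{T}+(X\mathcal{D}_{11}-EV)\theta<0$. Furthermore, for such $\theta$ the gain $K=U\theta(X\theta)^{-1}$ (which equals $UX^{+}$ with the right inverse $X^{+}=\theta(X\theta)^{-1}$ of $X$) makes $A+BK$ Hurwitz for all $(A,B)\in\Sigma$.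
   Context: The data arise from an agent $\dot x=\bar Ax+\bar Bu+Ev$ with unknown $(\bar A,\bar B)$ and known $E$, where $X,U,V$ collect the first $L$ coefficients of $x,u,v$ in a (Chebyshev) orthogonal polynomial basis and $\mathcal{D}_{11}$ is the leading $L\times L$ block of the basis differentiation matrix; in the noise-free case $(\bar A,\bar B)\in\Sigma$. Hurwitz means all eigenvalues have negative real part; $>0$ / $<0$ denote positive / negative definiteness of symmetric matrices. *)

(* Defs.v *)
From HB Require Import structures.
From mathcomp Require Import all_boot all_order all_algebra.
From mathcomp Require Import reals.
From mathcomp.real_closed Require Import complex.
Set Implicit Arguments. Unset Strict Implicit. Unset Printing Implicit Defensive.
Import Order.TTheory GRing.Theory Num.Theory.
Local Open Scope ring_scope.

Definition hurwitz (R : realType) (n : nat) (A : 'M[R]_n) : Prop :=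
  forall z : R[i], eigenvalue (map_mx (real_complex R) A) z -> complex.Re z < 0.

Definition posdef (R : realType) (n : nat) (M : 'M[R]_n) : Prop :=
  M^T = M /\ forall x : 'cV[R]_n, x != 0 -> 0 < (x^T *m M *m x) 0 0.

Definition negdef (R : realType) (n : nat) (M : 'M[R]_n) : Prop :=
  M^T = M /\ forall x : 'cV[R]_n, x != 0 -> (x^T *m M *m x) 0 0 < 0.

Definition Sigma (R : realType) (n m q L : nat)
  (X : 'M[R]_(n, L)) (U : 'M[R]_(m, L)) (V : 'M[R]_(q, L))
  (E : 'M[R]_(n, q)) (D11 : 'M[R]_L) (A : 'M[R]_n) (B : 'M[R]_(n, m)) : Prop :=
  X *m D11 = A *m X + B *m U + E *m V.

Definition informative_stab (R : realType) (n m q L : nat)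
  (X : 'M[R]_(n, L)) (U : 'M[R]_(m, L)) (V : 'M[R]_(q, L))
  (E : 'M[R]_(n, q)) (D11 : 'M[R]_L) : Prop :=
  exists K : 'M[R]_(m, n), forall A B,
    Sigma X U V E D11 A B -> hurwitz (A + B *m K).

(* Main.v *)
Require Import Defs.
From HB Require Import structures.
From mathcomp Require Import all_boot all_order all_algebra.
From mathcomp Require Import reals.
From mathcomp.real_closed Require Import complex.
From mathcomp Require Import ring lra.
Import Order.TTheory GRing.Theory Num.Theory.
Local Open Scope ring_scope.
Set Implicit Arguments. Unset Strict Implicit. Unset Printing Implicit Defensive.

Section Basic.
Variable R : realType.
Local Notation C := R[i].
Local Notation toC := (real_complex R).
Local Notation MtoC := (map_mx (real_complex R)).
Local Notation Re := (@complex.Re R).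
Local Notation Im := (@complex.Im R).

Lemma ReD (x y : C) : Re (x + y) = Re x + Re y.
Proof. by case: x => a b; case: y => c d. Qed.

Lemma ImD (x y : C) : Im (x + y) = Im x + Im y.
Proof. by case: x => a b; case: y => c d. Qed.

Lemma Re0 : Re 0 = 0. Proof. by []. Qed.

Lemma Re_sum (I : Type) (r : seq I) (P : pred I) (F : I -> C) :
  Re (\sum_(i <- r | P i) F i) = \sum_(i <- r | P i) Re (F i).
Proof. exact: (big_morph Re ReD Re0). Qed.

Lemma ReMr (a : R) (z : C) : Re (toC a * z) = a * Re z.
Proof. case: z => x y /=. ring. Qed.

Lemma ReMl (z : C) (a : R) : Re (z * toC a) = Re z * a.
Proof. case: z => x y /=. ring. Qed.

Lemma map_Re_mulr p q r (A : 'M[R]_(p,q)) (B : 'M[C]_(q,r)) :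
  map_mx Re (MtoC A *m B) = A *m map_mx Re B.
Proof.
apply/matrixP => i j; rewrite !mxE Re_sum; apply: eq_bigr => k _.
by rewrite !mxE ReMr.
Qed.

Lemma map_Re_mull p q r (B : 'M[C]_(p,q)) (A : 'M[R]_(q,r)) :
  map_mx Re (B *m MtoC A) = map_mx Re B *m A.
Proof.
apply/matrixP => i j; rewrite !mxE Re_sum; apply: eq_bigr => k _.
by rewrite !mxE ReMl.
Qed.

Lemma map_Re_add p q (A B : 'M[C]_(p,q)) :
  map_mx Re (A + B) = map_mx Re A + map_mx Re B.
Proof. by apply/matrixP => i j; rewrite !mxE ReD. Qed.

Definition nn (z : C) : R := Re z ^+ 2 + Im z ^+ 2.

Lemma nn_ge0 z : 0 <= nn z.
Proof. rewrite /nn; nra. Qed.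

Lemma nn_gt0 z : z != 0 -> 0 < nn z.
Proof.
case: z => a b nz; rewrite /nn /=.
have [a0|ha] := eqVneq a 0.
  have [b0|hb] := eqVneq b 0.
    by move: nz; rewrite a0 b0 eqxx.
  have H : 0 < b ^+ 2 by rewrite exprn_even_gt0. nra.
have H : 0 < a ^+ 2 by rewrite exprn_even_gt0. nra.
Qed.

Lemma Re_conj_mul (u : C) : Re (conjc u * u) = nn u.
Proof. case: u => a b; rewrite /nn /=; ring. Qed.

Lemma quadRe n (G : 'M[R]_n) (v : 'rV[C]_n) :
  Re ((v *m MtoC G *m map_mx conjc v^T) 0 0) =
  (map_mx Re v *m G *m (map_mx Re v)^T) 0 0 +
  (map_mx Im v *m G *m (map_mx Im v)^T) 0 0.
Proof.
rewrite !mxE Re_sum -big_split; apply: eq_bigr => j _ /=.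
rewrite !mxE !mulr_suml Re_sum -big_split; apply: eq_bigr => k _ /=.
rewrite !mxE.
move: (v 0 k) (v 0 j) (G k j) => [x1 x2] [y1 y2] g /=; ring.
Qed.

End Basic.

Section Suff.
Variable R : realType.
Local Notation C := R[i].
Local Notation toC := (real_complex R).
Local Notation MtoC := (map_mx (real_complex R)).
Local Notation Re := (@complex.Re R).
Local Notation Im := (@complex.Im R).

Lemma trmxZ' (K : pzRingType) p q (c : K) (A : 'M[K]_(p,q)) : (c *: A)^T = c *: A^T.
Proof. by apply/matrixP => i j; rewrite !mxE. Qed.

Lemma conj_real_mx p q (A : 'M[R]_(p,q)) : map_mx conjc (MtoC A) = MtoC A.
Proof. by apply/matrixP => i j; rewrite !mxE conjc_real. Qed.

Lemma posdef_row n (P : 'M[R]_n) : posdef P ->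
  forall a : 'rV[R]_n, a != 0 -> 0 < (a *m P *m a^T) 0 0.
Proof.
move=> [_ Pp] a a0; have := Pp a^T; rewrite trmxK; apply.
by rewrite trmx_eq0.
Qed.

Lemma negdef_row n (P : 'M[R]_n) : negdef P ->
  forall a : 'rV[R]_n, a != 0 -> (a *m P *m a^T) 0 0 < 0.
Proof.
move=> [_ Pp] a a0; have := Pp a^T; rewrite trmxK; apply.
by rewrite trmx_eq0.
Qed.

Lemma posdef_row_ge0 n (P : 'M[R]_n) : posdef P ->
  forall a : 'rV[R]_n, 0 <= (a *m P *m a^T) 0 0.
Proof.
move=> hP a; have [->|a0] := eqVneq a 0.
  by rewrite mul0mx mul0mx mxE.
exact/ltW/posdef_row.
Qed.

Lemma negdef_row_le0 n (P : 'M[R]_n) : negdef P ->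
  forall a : 'rV[R]_n, (a *m P *m a^T) 0 0 <= 0.
Proof.
move=> hP a; have [->|a0] := eqVneq a 0.
  by rewrite mul0mx mul0mx mxE.
exact/ltW/negdef_row.
Qed.

Lemma posdef_unit n (P : 'M[R]_n) : posdef P -> P \in unitmx.
Proof.
move=> hP; apply/negPn/negP => nu.
have : eigenvalue P 0.
  rewrite /eigenvalue /eigenspace.
  have -> : (0 : R)%:M = 0 :> 'M_n by rewrite -scalemx1 scale0r.
  by rewrite subr0 kermx_eq0 row_free_unit.
case/eigenvalueP => v vP v0.
have := posdef_row hP v0.
by rewrite vP scale0r mul0mx mxE ltxx.
Qed.

Lemma Re_2 (z q : C) : Re ((z + conjc z) * q) = 2 * Re z * Re q.
Proof. case: z => a b; case: q => c d /=; ring. Qed.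

Lemma rv_ReIm n (v : 'rV[C]_n) : map_mx Re v = 0 -> map_mx Im v = 0 -> v = 0.
Proof.
move=> /matrixP ha /matrixP hb; apply/matrixP => i j.
have := ha i j; have := hb i j; rewrite !mxE.
by case: (v i j) => a b /= -> ->.
Qed.

Lemma lyap_suff n (P M : 'M[R]_n) :
  posdef P -> negdef (M *m P + P *m M^T) -> hurwitz M.
Proof.
move=> hP hN z /eigenvalueP [v vM vn0].
set a := map_mx Re v; set b := map_mx Im v.
set vs := map_mx conjc v^T.
have hMt : (MtoC M)^T *m vs = conjc z *: vs.
  have := congr1 (fun w => (map_mx conjc w)^T) vM.
  rewrite /= map_mxM conj_real_mx trmx_mul map_mxZ trmxZ' => h.
  by rewrite /vs -map_trmx; exact: h.
have key : v *m MtoC (M *m P + P *m M^T) *m vs =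
           (z + conjc z) *: (v *m MtoC P *m vs).
  rewrite map_mxD !map_mxM -map_trmx mulmxDr mulmxDl.
  rewrite mulmxA vM -!scalemxAl -[v *m (MtoC P *m _) *m vs]mulmxA -[MtoC P *m _ *m vs]mulmxA hMt.
  by rewrite -!scalemxAr scalerDl !mulmxA.
have hq := Re_2 z ((v *m MtoC P *m vs) 0 0).
have e1 : Re ((v *m MtoC (M *m P + P *m M^T) *m vs) 0 0) =
          2 * Re z * Re ((v *m MtoC P *m vs) 0 0).
  by rewrite key mxE.
move: e1; rewrite !quadRe -/a -/b => e1.
have [a0|an0] := eqVneq a 0.
  have bn0 : b != 0.
    by apply/eqP => b0; move/eqP: vn0; apply; apply: rv_ReIm.
  have h1 := negdef_row hN bn0; have h2 := posdef_row hP bn0.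
  have h3 := negdef_row_le0 hN a; have h4 := posdef_row_ge0 hP a.
  nra.
have h1 := negdef_row hN an0; have h2 := posdef_row hP an0.
have h3 := negdef_row_le0 hN b; have h4 := posdef_row_ge0 hP b.
nra.
Qed.

End Suff.

Section Schur.
Variable R : realType.
Local Notation C := R[i].
Local Notation toC := (real_complex R).
Local Notation MtoC := (map_mx (real_complex R)).
Local Notation Re := (@complex.Re R).
Local Notation Im := (@complex.Im R).

Lemma schur_c n (A : 'M[C]_n) : (0 < n)%N ->
  exists Q : 'M[C]_n, [/\ Q \in unitmx, is_trig_mx (Q *m A *m invmx Q) &
    forall i, eigenvalue A ((Q *m A *m invmx Q) i i)].
Proof.
move=> n0; have [Q Qu Qt] := Schur A n0.
have Qi : Q \in unitmx by apply: unitarymx_unit.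
move: Qt; rewrite /similar_to /conjmx pinvmxE // => Qt.
exists Q; split => // i.
set T := Q *m A *m invmx Q.
have : eigenvalue T (T i i).
  rewrite eigenvalue_root_char char_poly_trig // /root horner_prod.
  by apply/prodf_eq0; exists i => //; rewrite hornerXsubC subrr.
case/eigenvalueP => w wT w0; apply/eigenvalueP; exists (w *m Q).
  have -> : w *m Q *m A = w *m T *m Q by rewrite /T !mulmxA mulmxKV.
  by rewrite wT -scalemxAl.
apply: contra w0 => /eqP wQ; apply/eqP.
by rewrite -[w](mulmxK Qi) wQ mul0mx.
Qed.

Lemma sum_lt0 n (f : 'I_n -> R) : (0 < n)%N -> (forall i, f i < 0) ->
  \sum_i f i < 0.
Proof.
case: n f => [//|n] f _ hf; rewrite big_ord_recl.
have : \sum_(i < n) f (lift ord0 i) <= 0.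
  have : 0 <= \sum_(i < n) - f (lift ord0 i).
    by apply: sumr_ge0 => i _; rewrite oppr_ge0; apply/ltW.
  by rewrite sumrN oppr_ge0.
have := hf ord0; lra.
Qed.

Lemma hurwitz_tr n (N : 'M[R]_n) : (0 < n)%N -> hurwitz N -> \tr N < 0.
Proof.
move=> n0 hN; have [Q [Qi Qt Qe]] := schur_c (MtoC N) n0.
have : Re (\tr (Q *m MtoC N *m invmx Q)) < 0.
  rewrite /mxtrace Re_sum; apply: sum_lt0 => // i.
  exact: hN (Qe i).
rewrite mxtrace_mulC mulmxA mulVmx // mul1mx.
by rewrite trace_map_mx.
Qed.

End Schur.

Section Bound.
Variable R : realType.
Local Notation C := R[i].
Local Notation toC := (real_complex R).
Local Notation MtoC := (map_mx (real_complex R)).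
Local Notation Re := (@complex.Re R).
Local Notation Im := (@complex.Im R).

Definition nu (w : C) : R := `|Re w| + `|Im w|.

Lemma nu_ge0 w : 0 <= nu w.
Proof. by rewrite /nu addr_ge0. Qed.

Lemma core_ineq (u w v : C) :
  Re (conjc u * w * v) <= nu w * ((nn u + nn v) / 2).
Proof.
case: u => u1 u2; case: w => p q; case: v => v1 v2; rewrite /nu /nn /=.
set B := (_ / 2).
have hX : `|u1 * v1 + u2 * v2| <= B.
  have := sqr_ge0 (u1 - v1); have := sqr_ge0 (u2 - v2).
  have := sqr_ge0 (u1 + v1); have := sqr_ge0 (u2 + v2).
  rewrite ler_norml /B; move=> *; apply/andP; split; nra.
have hY : `|u2 * v1 - u1 * v2| <= B.
  have := sqr_ge0 (u2 - v1); have := sqr_ge0 (u1 + v2).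
  have := sqr_ge0 (u2 + v1); have := sqr_ge0 (u1 - v2).
  rewrite ler_norml /B; move=> *; apply/andP; split; nra.
have e : (u1 * p - - u2 * q) * v1 - (u1 * q + - u2 * p) * v2 =
         p * (u1 * v1 + u2 * v2) + q * (u2 * v1 - u1 * v2) by ring.
rewrite e mulrDl.
have h1 : p * (u1 * v1 + u2 * v2) <= `|p| * B.
  apply: le_trans (ler_norm _) _; rewrite normrM.
  by apply: ler_wpM2l => //.
have h2 : q * (u2 * v1 - u1 * v2) <= `|q| * B.
  apply: le_trans (ler_norm _) _; rewrite normrM.
  by apply: ler_wpM2l => //.
lra.
Qed.


Lemma le_sum1 n (f : 'I_n -> R) k : (forall i, 0 <= f i) -> f k <= \sum_i f i.
Proof. by move=> h; rewrite (bigD1 k) //= lerDl sumr_ge0. Qed.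

Lemma ReMscal (u w v : C) (a b : R) :
  Re (conjc u * (toC a * w * toC b) * v) = (a * b) * Re (conjc u * w * v).
Proof. case: u => ? ?; case: w => ? ?; case: v => ? ? /=; ring. Qed.

Lemma Re_diag_term (u w : C) : Re (conjc u * w * u) = Re w * nn u.
Proof. case: u => ? ?; case: w => ? ?; rewrite /nn /=; ring. Qed.

Lemma cV_nz n (y : 'cV[C]_n) : y != 0 -> exists k, y k 0 != 0.
Proof.
move=> y0; have /existsP [k hk] : [exists k, y k 0 != 0].
  apply: contraR y0 => /existsPn h; apply/eqP/matrixP => a b.
  by rewrite (ord1 b) mxE; apply/eqP/negPn/h.
by exists k.
Qed.

Lemma sqn_gt0 n (y : 'cV[C]_n) : y != 0 -> 0 < \sum_k nn (y k 0).
Proof.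
move=> /cV_nz [k hk]; apply: lt_le_trans (nn_gt0 hk) _.
exact: (@le_sum1 n (fun k => nn (y k 0)) k (fun i => nn_ge0 _)).
Qed.

Lemma expr_le_eps (eps : R) k : 0 <= eps -> eps <= 1 -> (0 < k)%N -> eps ^+ k <= eps.
Proof.
move=> e0 e1; case: k => [//|k] _; rewrite exprS.
by rewrite -[leRHS]mulr1 ler_wpM2l // exprn_ile1.
Qed.

Lemma trig_bound n (T : 'M[C]_n) (eps mu : R) (y : 'cV[C]_n) :
  is_trig_mx T -> 0 < eps -> eps <= 1 -> 0 < mu ->
  (forall i, Re (T i i) <= - mu) ->
  eps * (\sum_j \sum_i nu (T i j)) < mu ->
  y != 0 ->
  Re ((((map_mx conjc y)^T *m
     (\matrix_(i,j) (toC (eps ^+ i) * T i j * toC (eps^-1 ^+ j)))) *m y) 0 0) < 0.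
Proof.
move=> /is_trig_mxP Tt e0 e1 m0 hd het y0.
set Ns := \sum_k nn (y k 0).
have Ns0 : 0 < Ns by apply: sqn_gt0.
have nnle : forall k, nn (y k 0) <= Ns.
  by move=> k; exact: (@le_sum1 n (fun k => nn (y k 0)) k (fun i => nn_ge0 _)).
have term : forall i j : 'I_n,
  Re (conjc (y i 0) * (toC (eps ^+ i) * T i j * toC (eps^-1 ^+ j)) * y j 0) <=
  (if i == j then - mu * nn (y i 0) else 0) + eps * Ns * nu (T i j).
  move=> i j; rewrite ReMscal.
  have hpos : 0 <= eps * Ns * nu (T i j).
    by rewrite mulr_ge0 ?nu_ge0 // mulr_ge0 // ltW.
  case: (ltngtP i j) => hij.
  - have -> : (i == j) = false by apply/negbTE; rewrite -val_eqE /= ltn_eqF.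
    by rewrite Tt // mulr0 mul0r add0r /nu /= normr0 addr0 !mulr0.
  - have -> : (i == j) = false by apply/negbTE; rewrite -val_eqE /= gtn_eqF.
    rewrite add0r.
    have hr : eps ^+ i * eps^-1 ^+ j = eps ^+ (i - j).
      rewrite -{1}(subnK (ltnW hij)) exprD exprVn mulfK //.
      by rewrite expf_neq0 // gt_eqF.
    rewrite hr.
    have r0 : 0 <= eps ^+ (i - j) by rewrite exprn_ge0 // ltW.
    have rle : eps ^+ (i - j) <= eps by apply: expr_le_eps => //; [exact: ltW | rewrite subn_gt0].
    apply: le_trans (ler_wpM2l r0 (core_ineq _ _ _)) _.
    have hb : (nn (y i 0) + nn (y j 0)) / 2 <= Ns.
      have := nnle i; have := nnle j; lra.
    have hnu := nu_ge0 (T i j).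
    have B0 : 0 <= (nn (y i 0) + nn (y j 0)) / 2.
      by rewrite divr_ge0 // addr_ge0 // nn_ge0.
    have h1 := ler_pM r0 B0 rle hb.
    by rewrite mulrCA [leRHS]mulrC ler_wpM2l.
  - have eij : i = j by apply: val_inj.
    move: hpos; rewrite -eij eqxx exprVn mulfV ?expf_neq0 ?gt_eqF // mul1r.
    rewrite Re_diag_term => hpos.
    have := hd i; have := nn_ge0 (y i 0); nra.
rewrite mxE Re_sum.
have e : forall j : 'I_n, Re (((map_mx conjc y)^T *m
     (\matrix_(i,j) (toC (eps ^+ i) * T i j * toC (eps^-1 ^+ j)))) 0 j * y j 0) =
    \sum_i Re (conjc (y i 0) * (toC (eps ^+ i) * T i j * toC (eps^-1 ^+ j)) * y j 0).
  by move=> j; rewrite mxE mulr_suml Re_sum; apply: eq_bigr => i _; rewrite !mxE.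
under eq_bigr do rewrite e.
apply: le_lt_trans (ler_sum _ (fun j _ => ler_sum _ (fun i _ => term i j))) _.
have e2 : forall j : 'I_n, \sum_i ((if i == j then - mu * nn (y i 0) else 0) + eps * Ns * nu (T i j))
   = - mu * nn (y j 0) + eps * Ns * \sum_i nu (T i j).
  move=> j; rewrite big_split /= -mulr_sumr; congr (_ + _).
  by rewrite (bigD1 j) //= eqxx big1 ?addr0 // => i /negbTE ->.
under eq_bigr do rewrite e2.
rewrite big_split /= -mulr_sumr -mulr_sumr -/Ns.
nra.
Qed.

End Bound.

Section StepA.
Variable R : realType.
Local Notation C := R[i].
Local Notation toC := (real_complex R).
Local Notation MtoC := (map_mx (real_complex R)).
Local Notation Re := (@complex.Re R).
Local Notation Im := (@complex.Im R).

Definition cT p q (A : 'M[C]_(p,q)) : 'M[C]_(q,p) := (map_mx conjc A)^T.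

Lemma cT_mul p q r (A : 'M[C]_(p,q)) (B : 'M[C]_(q,r)) : cT (A *m B) = cT B *m cT A.
Proof. by rewrite /cT map_mxM trmx_mul. Qed.

Lemma cTK p q (A : 'M[C]_(p,q)) : cT (cT A) = A.
Proof. by apply/matrixP => i j; rewrite !mxE conjcK. Qed.

Lemma cT_real p q (A : 'M[R]_(p,q)) : cT (MtoC A) = MtoC (A^T).
Proof. by apply/matrixP => i j; rewrite !mxE conjc_real. Qed.

Lemma cT1 p : cT (1%:M : 'M[C]_p) = 1%:M.
Proof.
have -> : (1%:M : 'M[C]_p) = MtoC 1%:M by rewrite map_mx1.
by rewrite cT_real trmx1.
Qed.

Lemma sq_Re n (y : 'cV[C]_n) : Re ((cT y *m y) 0 0) = \sum_k nn (y k 0).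
Proof. by rewrite mxE Re_sum; apply: eq_bigr => k _; rewrite !mxE Re_conj_mul. Qed.

Lemma herm_Re_sym n (H : 'M[C]_n) : cT H = H -> (map_mx Re H)^T = map_mx Re H.
Proof.
move=> HH; apply/matrixP => i j; rewrite !mxE.
have := congr1 (fun A : 'M[C]_n => A i j) HH; rewrite /cT !mxE => <-.
by case: (H j i).
Qed.

Lemma lyap_from_F n (M : 'M[R]_n) (F Fi : 'M[C]_n) :
  Fi *m F = 1%:M -> F *m Fi = 1%:M ->
  (forall y : 'cV[C]_n, y != 0 -> Re ((cT y *m (F *m MtoC M *m Fi) *m y) 0 0) < 0) ->
  exists P, posdef P /\ negdef (M *m P + P *m M^T).
Proof.
move=> hFiF hFFi hT.
set H := Fi *m cT Fi.
have HH : cT H = H by rewrite /H cT_mul cTK.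
have Psym : (map_mx Re H)^T = map_mx Re H by apply: herm_Re_sym.
pose y (x : 'cV[R]_n) := cT Fi *m MtoC x.
have cTy : forall x, cT (y x) = MtoC (x^T) *m Fi.
  by move=> x; rewrite /y cT_mul cTK cT_real.
have ynz : forall x, x != 0 -> y x != 0.
  move=> x x0; apply: contra x0 => /eqP y0.
  have : cT F *m y x = MtoC x by rewrite /y mulmxA -cT_mul hFiF cT1 mul1mx.
  by rewrite y0 mulmx0 => /esym/eqP; rewrite map_mx_eq0.
exists (map_mx Re H); split.
  split => // x x0.
  have -> : x^T *m map_mx Re H *m x = map_mx Re (MtoC (x^T) *m H *m MtoC x).
    by rewrite map_Re_mull map_Re_mulr.
  have -> : MtoC (x^T) *m H *m MtoC x = cT (y x) *m y x.
    by rewrite cTy /H /y !mulmxA.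
  by rewrite mxE sq_Re sqn_gt0 // ynz.
split.
  by rewrite raddfD /= !trmx_mul trmxK Psym addrC.
move=> x x0.
have e1 : (x^T *m (M *m map_mx Re H + map_mx Re H *m M^T) *m x) 0 0 =
          2 * (x^T *m M *m map_mx Re H *m x) 0 0.
  have t : forall A : 'M[R]_1, A 0 0 = A^T 0 0 by move=> A; rewrite mxE.
  rewrite mulmxDr mulmxDl mxE (t (x^T *m (map_mx Re H *m M^T) *m x)).
  rewrite !trmx_mul !trmxK Psym !mulmxA; ring.
rewrite e1.
have -> : x^T *m M *m map_mx Re H *m x = map_mx Re (MtoC (x^T *m M) *m H *m MtoC x).
  by rewrite map_Re_mull map_Re_mulr.
have -> : MtoC (x^T *m M) *m H *m MtoC x = cT (y x) *m (F *m MtoC M *m Fi) *m y x.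
  rewrite cTy /H /y map_mxM !mulmxA.
  by rewrite -[MtoC x^T *m Fi *m F]mulmxA hFiF mulmx1.
rewrite mxE; have := hT _ (ynz _ x0); lra.
Qed.

End StepA.

Section StepB.
Variable R : realType.
Local Notation C := R[i].
Local Notation toC := (real_complex R).
Local Notation MtoC := (map_mx (real_complex R)).
Local Notation Re := (@complex.Re R).
Local Notation Im := (@complex.Im R).

Lemma lyap_conv n (M : 'M[R]_n) : (0 < n)%N -> hurwitz M ->
  exists P, posdef P /\ negdef (M *m P + P *m M^T).
Proof.
move=> n0 hM.
have [Q [Qi Qt Qe]] := schur_c (MtoC M) n0.
set T := Q *m MtoC M *m invmx Q in Qt Qe.
have hRe : forall i, Re (T i i) < 0 by move=> i; exact: hM _ (Qe i).
set kap := \sum_i (- Re (T i i))^-1.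
have kap0 : 0 <= kap.
  by apply: sumr_ge0 => i _; rewrite invr_ge0 oppr_ge0 ltW.
set mu := (1 + kap)^-1.
have mu0 : 0 < mu by rewrite invr_gt0; lra.
have hmu : forall i, Re (T i i) <= - mu.
  move=> i; set a := - Re (T i i).
  have a0 : 0 < a by rewrite /a oppr_gt0.
  have hk : a^-1 <= kap.
    apply: (@le_sum1 _ n (fun i => (- Re (T i i))^-1) i) => j.
    by rewrite invr_ge0 oppr_ge0 ltW.
  suff : mu <= a by rewrite /a; lra.
  rewrite /mu -[leLHS]div1r ler_pdivrMr; last lra.
  have : a * a^-1 = 1 by rewrite mulfV // gt_eqF.
  nra.
set tau := \sum_j \sum_i nu (T i j).
have tau0 : 0 <= tau.
  by apply: sumr_ge0 => j _; apply: sumr_ge0 => i _; apply: nu_ge0.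
set eps := mu / (1 + tau + mu).
have den0 : 0 < 1 + tau + mu by lra.
have eps0 : 0 < eps by rewrite divr_gt0.
have eps1 : eps <= 1 by rewrite /eps ler_pdivrMr //; lra.
have epst : eps * tau < mu.
  by rewrite /eps mulrAC ltr_pdivrMr //; nra.
have epsn0 : eps != 0 by rewrite gt_eqF.
pose d := \row_(i < n) toC (eps ^+ i).
pose di := \row_(i < n) toC (eps^-1 ^+ i).
have hDDi : diag_mx d *m diag_mx di = 1%:M.
  rewrite mulmx_diag -diag_const_mx; congr diag_mx; apply/rowP => j.
  by rewrite !mxE -rmorphM exprVn mulfV ?expf_neq0 // rmorph1.
have hDiD : diag_mx di *m diag_mx d = 1%:M by rewrite diag_mxC.
set F := diag_mx d *m Q.
set Fi := invmx Q *m diag_mx di.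
have hFiF : Fi *m F = 1%:M.
  by rewrite /F /Fi mulmxA -(mulmxA (invmx Q)) hDiD mulmx1 mulVmx.
have hFFi : F *m Fi = 1%:M.
  by rewrite /F /Fi mulmxA -(mulmxA (diag_mx d)) mulmxV // mulmx1 hDDi.
apply: (lyap_from_F hFiF hFFi) => y y0.
have -> : F *m MtoC M *m Fi =
    \matrix_(i,j) (toC (eps^+i) * T i j * toC (eps^-1 ^+ j)).
  have -> : F *m MtoC M *m Fi = diag_mx d *m T *m diag_mx di.
    by rewrite /F /Fi /T !mulmxA.
  rewrite mul_diag_mx mul_mx_diag; apply/matrixP => i j.
  by rewrite !mxE.
rewrite /cT; apply: (trig_bound Qt eps0 eps1 mu0 hmu epst y0).
Qed.

End StepB.

Section Main.
Variable R : realType.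

Lemma sumsq_gt0 n (s : 'cV[R]_n) : s != 0 -> 0 < (s^T *m s) 0 0.
Proof.
move=> s0; have /existsP [k hk] : [exists k, s k 0 != 0].
  apply: contraR s0 => /existsPn h; apply/eqP/matrixP => a b.
  by rewrite (ord1 b) mxE; apply/eqP/negPn/h.
rewrite mxE (bigD1 k) //= !mxE.
have h1 : 0 < s k 0 * s k 0 by rewrite -expr2 exprn_even_gt0.
have h2 : 0 <= \sum_(i | i != k) s^T 0 i * s i 0.
  by apply: sumr_ge0 => i _; rewrite mxE -expr2 sqr_ge0.
lra.
Qed.

Lemma inform_G n m L (X : 'M[R]_(n,L)) (U : 'M[R]_(m,L)) (K : 'M[R]_(m,n))
  (A0 : 'M[R]_n) (B0 : 'M[R]_(n,m)) (Y : 'M[R]_(n,L)) :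
  (0 < n)%N -> A0 *m X + B0 *m U = Y ->
  (forall A B, A *m X + B *m U = Y -> hurwitz (A + B *m K)) ->
  exists G, X *m G = 1%:M /\ U *m G = K.
Proof.
move=> n0 hS0 hK.
set T := row_mx X^T U^T.
set S := row_mx (1%:M : 'M[R]_n) K^T.
have sub : (S <= T)%MS.
  apply/negPn/negP => ns.
  have SZ : S *m cokermx T != 0 by rewrite -submxE.
  set Z := cokermx T in SZ.
  have TZ : T *m Z = 0 := mulmx_coker T.
  have /existsP [j hj] : [exists j, S *m (Z *m delta_mx j (0 : 'I_1)) != 0].
    apply: contraR SZ => /existsPn h; apply/eqP/matrixP => a b.
    have := h b; rewrite negbK mulmxA => /eqP/matrixP/(_ a 0).
    by rewrite -colE !mxE.
  set c := Z *m delta_mx j (0 : 'I_1) in hj.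
  have Tc : T *m c = 0 by rewrite /c mulmxA TZ mul0mx.
  set s := S *m c in hj.
  set c1 := usubmx c; set c2 := dsubmx c.
  have ec : c = col_mx c1 c2 by rewrite vsubmxK.
  have hw : c1^T *m X + c2^T *m U = 0.
    have := congr1 trmx Tc; rewrite /T ec mul_row_col raddfD /= !trmx_mul !trmxK.
    by move=> ->; rewrite trmx0.
  have hs : c1^T + c2^T *m K = s^T.
    by rewrite /s /S ec mul_row_col mul1mx raddfD /= trmx_mul trmxK.
  clearbody c1 c2 s.
  set M0 := A0 + B0 *m K.
  set t := - \tr M0 / (s^T *m s) 0 0.
  have ss0 := sumsq_gt0 hj.
  have hS : (A0 + t *: (s *m c1^T)) *m X + (B0 + t *: (s *m c2^T)) *m U = Y.
    rewrite !mulmxDl -hS0 -!scalemxAl -!mulmxA addrACA -scalerDr -mulmxDr hw.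
    by rewrite mulmx0 scaler0 addr0.
  have := hurwitz_tr n0 (hK _ _ hS).
  have -> : A0 + t *: (s *m c1^T) + (B0 + t *: (s *m c2^T)) *m K =
            M0 + t *: (s *m s^T).
    rewrite mulmxDl -scalemxAl -mulmxA addrACA -scalerDr -mulmxDr hs.
    by rewrite /M0.
  rewrite mxtraceD mxtraceZ mxtrace_mulC trace_mx11 /t.
  by rewrite divfK ?gt_eqF // addrN ltxx.
have [D0 hD0] := submxP sub.
move: hD0; rewrite /S /T mul_mx_row => /eq_row_mx [h1 h2].
exists D0^T; split.
  by rewrite -[X]trmxK -trmx_mul -h1 trmx1.
by rewrite -[U]trmxK -trmx_mul -h2 trmxK.
Qed.

End Main.

Unset Implicit Arguments. Set Strict Implicit.

Theorem theorem2 (R : realType) (n m q L : nat)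
  (X : 'M[R]_(n, L)) (U : 'M[R]_(m, L)) (V : 'M[R]_(q, L))
  (E : 'M[R]_(n, q)) (D11 : 'M[R]_L) :
  (0 < n)%N -> (0 < m)%N -> (0 < q)%N -> (0 < L)%N ->
  (exists A B, Sigma X U V E D11 A B) ->
  (informative_stab X U V E D11 <->
     exists theta : 'M[R]_(L, n),
       posdef (X *m theta) /\
       negdef (theta^T *m (X *m D11 - E *m V)^T + (X *m D11 - E *m V) *m theta))
  /\
  (forall theta : 'M[R]_(L, n),
     posdef (X *m theta) ->
     negdef (theta^T *m (X *m D11 - E *m V)^T + (X *m D11 - E *m V) *m theta) ->
     X *m (theta *m invmx (X *m theta)) = 1%:M /\
     forall A B, Sigma X U V E D11 A B ->
       hurwitz (A + B *m (U *m theta *m invmx (X *m theta)))).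
Proof.
move=> n0 m0 q0 L0 [A0 [B0 hS0]].
set Y := X *m D11 - E *m V.
have hSY : forall A B, Sigma X U V E D11 A B -> A *m X + B *m U = Y.
  by move=> A B hS; rewrite /Y hS addrK.
have part2 : forall theta : 'M[R]_(L, n),
     posdef (X *m theta) ->
     negdef (theta^T *m Y^T + Y *m theta) ->
     X *m (theta *m invmx (X *m theta)) = 1%:M /\
     forall A B, Sigma X U V E D11 A B ->
       hurwitz (A + B *m (U *m theta *m invmx (X *m theta))).
  move=> th hP hN; set P := X *m th in hP hN *.
  have Pu := posdef_unit hP.
  have hXi : X *m (th *m invmx P) = 1%:M by rewrite mulmxA mulmxV.
  split => // A B hS.
  have -> : A + B *m (U *m th *m invmx P) = Y *m th *m invmx P.
    by rewrite -(hSY _ _ hS) !mulmxDl -!mulmxA hXi mulmx1.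
  apply: (lyap_suff hP).
  have Psym : P^T = P by case: hP.
  have -> : Y *m th *m invmx P *m P = Y *m th by rewrite mulmxKV.
  have -> : P *m (Y *m th *m invmx P)^T = th^T *m Y^T.
    by rewrite -{1}Psym -trmx_mul mulmxKV // trmx_mul.
  by rewrite addrC.
split; last exact: part2.
split.
  move=> [K hK].
  have [G [hXG hUG]] : exists G : 'M[R]_(L, n), X *m G = 1%:M /\ U *m G = K.
    apply: (inform_G n0 (hSY _ _ hS0)) => A B hAB; apply: hK.
    by rewrite /Sigma -[X *m D11](subrK (E *m V)) -/Y -hAB.
  have hM0 : A0 + B0 *m K = Y *m G.
    by rewrite -(hSY _ _ hS0) mulmxDl -!mulmxA hXG hUG mulmx1.
  have [P [hP hN]] := lyap_conv n0 (hK _ _ hS0).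
  exists (G *m P); rewrite mulmxA hXG mul1mx; split => //.
  have Psym : P^T = P by case: hP.
  rewrite hM0 in hN.
  have -> : (G *m P)^T *m Y^T + Y *m (G *m P) =
            Y *m G *m P + P *m (Y *m G)^T.
    by rewrite addrC !trmx_mul Psym !mulmxA.
  exact: hN.
move=> [th [hP hN]].
exists (U *m th *m invmx (X *m th)).
exact: (part2 th hP hN).2.
Qed.
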